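(* Let $(S,\mathcal{S})$ be a measurable space with $\Delta\in\mathcal{S}\otimes\mathcal{S}$ and let $\pi:\Omega \to C(S)$ be a constructive cr-set with independent increments. Then there exist finite measures $\mu_{n}:\mathcal{S}\to [0,\infty)$, $n\in\mathbb{N}$, such that $-\log(1-T_{\pi}(A))=\sum_{n\in\mathbb{N}}\mu_{n}(A)$ for all $A\in\mathcal{S}$ (with $-\log 0=\infty$).
   Context: $\Delta=\{(x,x)\mid x\in S\}$. $(\Omega,\mathcal{F},P)$ is a probability space; $C(S)$ is the set of countable subsets of $S$; $N_A(M)=|A\cap M|$; $\mathcal{C}(\mathcal{S})=\sigma(N_A\mid A\in\mathcal{S})$; a cr-set is an $\mathcal{F}$-$\mathcal{C}(\mathcal{S})$ measurable map $\Omega\to C(S)$, finite if its values are finite sets. A map $\tau:\Omega\to C(S)$ is constructive if $\tau(\omega)=\bigcup_k\pi_k(\omega)$ for all $\omega$ for some finite cr-sets $\pi_k$, $k\in\mathbb{N}$. A cr-set $\pi$ has independent increments if $N_{A_1}(\pi),\dots,N_{A_n}(\pi)$ are independent for all pairwise disjoint $A_1,\dots,A_n\in\mathcal{S}$. The hitting function is $T_\pi(A)=P(\pi\cap A\neq\emptyset)$, $A\in\mathcal{S}$. *)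

(* Defs.v *)
From HB Require Import structures.
From mathcomp Require Import all_boot all_order all_algebra.
From mathcomp Require Import finmap.
From mathcomp Require Import all_classical all_reals all_analysis.
Set Implicit Arguments. Unset Strict Implicit. Unset Printing Implicit Defensive.
Import Order.TTheory GRing.Theory Num.Theory.
Local Open Scope classical_set_scope.
Local Open Scope ring_scope.
Local Open Scope ereal_scope.

Section Defs.

(* N_A(M) = |A ∩ M| in {0,1,2,...} ∪ {oo}; None stands for oo *)
Definition Ncount (S : choiceType) (A M : set S) : option nat :=
  if pselect (finite_set (A `&` M)) is left _
  then Some #|` fset_set (A `&` M)|%fset else None.

Definition CS_gen d (S : measurableType d) : set (set (set S)) :=
  [set [set M | Ncount A M = k] | A in [set A | measurable A] & k in [set: option nat]].

Definition CS_sigma d (S : measurableType d) : set (set (set S)) :=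
  <<s [set: set S], @CS_gen d S >>.

Definition cr_set d dO (S : measurableType d) (Omega : measurableType dO)
  (pi : Omega -> set S) : Prop :=
  (forall w, countable (pi w)) /\
  (forall B, @CS_sigma d S B -> measurable (pi @^-1` B)).

Definition finite_cr_set d dO (S : measurableType d) (Omega : measurableType dO)
  (pi : Omega -> set S) : Prop :=
  cr_set pi /\ (forall w, finite_set (pi w)).

Definition constructive d dO (S : measurableType d) (Omega : measurableType dO)
  (tau : Omega -> set S) : Prop :=
  exists pik : nat -> Omega -> set S,
    (forall k, finite_cr_set (pik k)) /\
    (forall w, tau w = \bigcup_k pik k w).

Definition independent_increments d dO (S : measurableType d)
  (Omega : measurableType dO) {R : realType} (P : probability Omega R)
  (pi : Omega -> set S) : Prop :=
  forall (n : nat) (A : 'I_n -> set S),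
    (forall i, measurable (A i)) ->
    (forall i j : 'I_n, i != j -> A i `&` A j = set0) ->
    forall B : 'I_n -> set (option nat),
      P (\bigcap_(i in [set: 'I_n]) [set w | B i (Ncount (A i) (pi w))]) =
      \big[*%E/1%E]_(i < n) P [set w | B i (Ncount (A i) (pi w))].

Definition hitting d dO (S : measurableType d) (Omega : measurableType dO)
  {R : realType} (P : probability Omega R) (pi : Omega -> set S) (A : set S) : \bar R :=
  P [set w | pi w `&` A !=set0].

Definition neglog1m {R : realType} (x : \bar R) : \bar R :=
  if x == 1 then +oo else (- ln (1 - fine x)%R)%:E.

End Defs.

(* Main.v *)
Require Import Defs.
From HB Require Import structures.
From mathcomp Require Import all_boot all_order all_algebra finmap.
From mathcomp Require Import all_classical all_reals all_analysis.
From mathcomp Require Import measurable_realfun.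
From mathcomp Require Import lra.
Import Order.TTheory GRing.Theory Num.Theory.
Set Implicit Arguments. Unset Strict Implicit. Unset Printing Implicit Defensive.
Import numFieldNormedType.Exports.
Local Open Scope classical_set_scope.
Local Open Scope ring_scope.
Local Open Scope ereal_scope.

Lemma Ncount0 (S : choiceType) (A M : set S) :
  Ncount A M = Some 0%N <-> A `&` M = set0.
Proof.
rewrite /Ncount; case: pselect => [fin|nfin]; split => //.
- by case=> /eqP; rewrite cardfs_eq0 => /eqP/(fset_set_set0 fin).
- by move=> ->; rewrite fset_set0 cardfs0.
- by move=> E; exfalso; apply: nfin; rewrite E.
Qed.

Lemma Ncount_meas d dO (S : measurableType d) (Omega : measurableType dO)
  (pi : Omega -> set S) (A : set S) k :
  cr_set pi -> measurable A -> measurable (pi @^-1` [set M | Ncount A M = k]).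
Proof.
move=> [_ H] mA; apply: H; apply: sub_gen_smallest.
by exists A => //; exists k.
Qed.


Section fmeasure.
Variables (R : realType) (d : measure_display) (S : measurableType d)
  (dO : measure_display) (Omega : measurableType dO) (P : probability Omega R)
  (pi : Omega -> set S).
Hypothesis Hcr : cr_set pi.
Hypothesis Hind : independent_increments P pi.

Definition EE (A : set S) := [set w | pi w `&` A = set0].

Lemma EE_meas A : measurable A -> measurable (EE A).
Proof.
move=> mA; have := @Ncount_meas _ _ _ _ _ _ (Some 0%N) Hcr mA.
congr measurable; apply/seteqP; split => w /=.
  by move/Ncount0; rewrite setIC.
by move=> H; apply/Ncount0; rewrite setIC.
Qed.

Lemma indep2 A B : measurable A -> measurable B -> A `&` B = set0 ->
  P (EE A `&` EE B) = P (EE A) * P (EE B).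
Proof.
move=> mA mB AB.
pose F := fun i : 'I_2 => if i == ord0 then A else B.
have := @Hind 2%N F _ _ (fun=> [set Some 0%N]).
rewrite !big_ord_recr big_ord0 /= mul1e.
have E1 : forall C, [set w | [set Some 0%N] (Ncount C (pi w))] = EE C.
  move=> C; apply/seteqP; split => w /=.
    by move/Ncount0; rewrite setIC.
  by move=> H; apply/Ncount0; rewrite setIC.
rewrite !E1 /F /=.
move=> <- //.
- congr (P _); apply/seteqP; split => w /=.
    by move=> [H1 H2] i _; apply/Ncount0; rewrite setIC; case: i => -[|[|//]] ? /=.
  by move=> H; split; [have := H ord0 I|have := H ord_max I] => /Ncount0; rewrite setIC.
- by move=> i; rewrite /F; case: ifP.
- move=> i j; rewrite /F; case: i => -[|[|//]] ?; case: j => -[|[|//]] ? //=.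
  by rewrite setIC.
Qed.

Definition pp (A : set S) : R := fine (P (EE A)).

Lemma ppE A : measurable A -> P (EE A) = (pp A)%:E.
Proof.
move=> mA; rewrite /pp fineK// ge0_fin_numE//.
by rewrite (le_lt_trans (probability_le1 P (EE_meas mA))) ?ltey.
Qed.

Lemma pp_ge0 A : (0 <= pp A)%R.
Proof. by rewrite /pp fine_ge0. Qed.

Lemma pp_le1 A : measurable A -> (pp A <= 1)%R.
Proof. by move=> mA; rewrite -lee_fin -ppE// probability_le1//; exact: EE_meas. Qed.

Definition gl (x : R) : \bar R := if x == 0%R then +oo else (- ln x)%:E.

Definition fm (A : set S) := neglog1m (hitting P pi A).

Lemma fmE A : measurable A -> fm A = gl (pp A).
Proof.
move=> mA; rewrite /fm /hitting.
have -> : [set w | pi w `&` A !=set0] = ~` EE A.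
  apply/seteqP; split => w /=.
    by move=> [x Xx] E; rewrite E in Xx.
  by move=> H; apply/set0P/eqP.
rewrite probability_setC; last exact: EE_meas.
rewrite ppE// -EFinB /neglog1m /gl eqe /=.
case: (eqVneq (pp A) 0%R) => [->|p0].
  by rewrite subr0 eqxx.
have -> : ((1 - pp A)%R == 1%R) = false.
  apply/negbTE; apply: contra p0 => /eqP H.
  by apply/eqP; rewrite -(subKr 1%R (pp A)) H subrr.
by rewrite subKr.
Qed.

Lemma gl1 : gl 1 = 0.
Proof. by rewrite /gl oner_eq0 ln1 oppr0. Qed.

Lemma glM x y : (0 <= x)%R -> (0 <= y)%R -> gl (x * y) = gl x + gl y.
Proof.
move=> x0 y0; rewrite /gl mulf_eq0.
case: (eqVneq x 0%R) => [->|xn0] /=.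
  by rewrite addye//; case: ifP.
have [y00|yn0] := eqVneq y 0%R.
  by subst y; rewrite addey.
rewrite lnM ?posrE ?lt0r ?xn0 ?yn0//.
by rewrite opprD EFinD.
Qed.

Lemma gl_cvg (u : nat -> R) (l : R) :
  (forall n, l <= u n)%R -> (0 <= l)%R -> u n @[n --> \oo] --> l ->
  gl (u n) @[n --> \oo] --> gl l.
Proof.
move=> lu l0 ucvg.
case: (eqVneq l 0%R) => [l00|ln0].
  subst l; rewrite /gl eqxx; apply/cvgeyPge => M.
  have H := @cvgr_lt _ _ _ _ u _ ucvg _ (expR_gt0 (- M)).
  near=> n.
  have un : (u n < expR (- M))%R by near: n; exact: H.
  case: ifP => [_|un00]; first exact: leey.
  have un0 : u n != 0%R by rewrite un00.
  rewrite lee_fin lerNr -(expRK (- M)%R).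
  have u0 : (0 < u n)%R by rewrite lt0r un0 lu.
  by rewrite ltW// ltr_ln// posrE expR_gt0.
have lp : (0 < l)%R by rewrite lt0r ln0 l0.
have un0 n : (u n == 0%R) = false.
  by apply/negbTE; rewrite gt_eqF// (lt_le_trans lp).
rewrite /gl (negbTE ln0).
under eq_fun do rewrite un0.
apply/fine_cvgP; split; first by near=> n.
apply: cvgN => /=.
exact: (continuous_cvg _ (continuous_ln lp) ucvg).
Unshelve. all: by end_near.
Qed.

Lemma EE0 : EE set0 = setT.
Proof. by apply/seteqP; split => w //= _; rewrite /EE /= setI0. Qed.

Lemma EEU A B : EE (A `|` B) = EE A `&` EE B.
Proof.
apply/seteqP; split => w; rewrite /EE /=.
  by rewrite setIUr setU_eq0.
by move=> [H1 H2]; rewrite setIUr H1 H2 setU0.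
Qed.

Lemma fm0 : fm set0 = 0.
Proof.
rewrite fmE// /pp EE0 probability_setT /= gl1 //.
Qed.

Lemma fm_add A B : measurable A -> measurable B -> A `&` B = set0 ->
  fm (A `|` B) = fm A + fm B.
Proof.
move=> mA mB AB; rewrite !fmE//; last exact: measurableU.
rewrite -glM ?pp_ge0//; congr gl.
by rewrite /pp EEU indep2// !ppE//.
Qed.


Lemma fm_partial (F : (set S)^nat) : (forall i, measurable (F i)) ->
  trivIset setT F -> forall n,
  \sum_(0 <= i < n) fm (F i) = fm (\big[setU/set0]_(i < n) F i).
Proof.
move=> mF tF; elim => [|n IH].
  by rewrite big_nil big_ord0 fm0.
rewrite big_nat_recr //= IH big_ord_recr /= fm_add //.
- exact: bigsetU_measurable.
- rewrite -bigcup_mkord; apply/seteqP; split => x //= [[i /= ilt Fix] Fnx].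
  have := tF i n I I => H.
  have : i = n by apply: H; exists x.
  by move=> E; move: ilt; rewrite /= E ltnn.
Qed.

Lemma fm_ge0 A : 0 <= fm A.
Proof.
rewrite /fm /neglog1m; case: ifP => _; first exact: leey.
rewrite lee_fin oppr_ge0.
have h0 : 0 <= hitting P pi A by exact: measure_ge0.
have [x_le1|x_gt1] := leP (fine (hitting P pi A)) 1%R.
  have [ge0|lt0] := leP (1 - fine (hitting P pi A))%R 0%R.
    by rewrite ln0.
  by apply: ln_le0; rewrite lerBlDr lerDl fine_ge0.
by rewrite ln0// subr_le0 ltW.
Qed.

Lemma fm_ssa : semi_sigma_additive fm.
Proof.
move=> F mF tF mU.
under eq_fun do rewrite fm_partial//.
pose U n := \big[setU/set0]_(i < n) F i.
have mUn n : measurable (U n) by exact: bigsetU_measurable.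
have -> : (fun n => fm (\big[setU/set0]_(i < n) F i)) = fun n => gl (pp (U n)).
  by apply/funext => n /=; rewrite fmE//; exact: mUn.
rewrite fmE//; apply: gl_cvg; last first.
- have capE : \bigcap_n EE (U n) = EE (\bigcup_n F n).
    rewrite -bigcup_bigsetU_bigcup.
    apply/seteqP; split => w /=.
      move=> H; apply/seteqP; split => // x [pix [n _ Ux]].
      have := H n.+1 I; rewrite /EE /= => E.
      by have : (pi w `&` U n.+1) x by [split]; rewrite E.
    move=> E n _; apply/seteqP; split => // x [pix Ux].
    have : (pi w `&` \bigcup_k \big[setU/set0]_(i < k.+1) F i) x.
      split => //; exists n => //; exact: (@subset_bigsetU _ F n n.+1).
    by rewrite /EE /= in E; rewrite E.
  have := @nonincreasing_cvg_mu _ _ _ P (fun n => EE (U n)) _ _ _ _.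
  rewrite capE; move=> /(_ _ _ _ _) H.
  have H' : (fun n => P (EE (U n))) @ \oo --> P (EE (\bigcup_n F n)).
    apply: H.
    + by rewrite (le_lt_trans (probability_le1 P (EE_meas (mUn 0%N)))) ?ltey.
    + by move=> n; exact: EE_meas.
    + by rewrite -capE; apply: bigcapT_measurable => n; exact: EE_meas.
    + move=> n m nm; apply/subsetPset => w; rewrite /EE /=.
      move=> E; apply/seteqP; split => // x [pix Ux].
      have : (pi w `&` U m) x by split => //; exact: (subset_bigsetU nm).
      by rewrite E.
  rewrite ppE// in H'; have [_ H2] := proj1 (fine_cvgP _ _) H'.
  apply: cvg_trans H2; apply: near_eq_cvg; near=> n => /=.
  by rewrite ppE.
- exact: pp_ge0.
- move=> n; rewrite -lee_fin -!ppE//; apply: le_measure; rewrite ?inE; try exact: EE_meas.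
  move=> w; rewrite /EE /= => E; apply/seteqP; split => // x [pix Ux].
  have : (pi w `&` \bigcup_n F n) x.
    split => //; exact: (@bigsetU_bigcup _ F n).
  by rewrite E.
Unshelve. all: by end_near.
Qed.

End fmeasure.




Definition fmm (R : realType) d (S : measurableType d) dO (Omega : measurableType dO)
  (P : probability Omega R) (pi : Omega -> set S)
  (Hcr : cr_set pi) (Hind : independent_increments P pi) : set S -> \bar R :=
  fm P pi.

Section fmm_inst.
Variables (R : realType) (d : measure_display) (S : measurableType d)
  (dO : measure_display) (Omega : measurableType dO) (P : probability Omega R)
  (pi : Omega -> set S).
Variables (Hcr : cr_set pi) (Hind : independent_increments P pi).

HB.instance Definition _ := isMeasure.Build _ _ _ (fmm Hcr Hind)
  (fm0 P Hcr) (@fm_ge0 _ _ _ _ _ P pi) (fm_ssa Hcr Hind).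
End fmm_inst.



Lemma measurable_nat2 d (T : measurableType d) (R : realType) (f g : T -> nat)
  (F : nat -> nat -> \bar R) :
  (forall j, measurable (f @^-1` [set j])) ->
  (forall j, measurable (g @^-1` [set j])) ->
  measurable_fun setT (fun w => F (f w) (g w)).
Proof.
move=> mf mg _ Y mY; rewrite setTI.
have -> : (fun w => F (f w) (g w)) @^-1` Y =
  \bigcup_i \bigcup_j (f @^-1` [set i] `&` g @^-1` [set j] `&` [set _ | Y (F i j)]).
  apply/seteqP; split => w /=.
    by move=> Yw; exists (f w) => //; exists (g w).
  by move=> [i _ [j _ [[/= <- <-]]]].
apply: bigcupT_measurable => i; apply: bigcupT_measurable => j.
apply: measurableI; first exact: measurableI.
case: (pselect (Y (F i j))) => H.
  by have -> : [set _ : T | Y (F i j)] = setT by apply/seteqP; split.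
by have -> : [set _ : T | Y (F i j)] = set0 by apply/seteqP; split.
Qed.

Lemma NcountE (S : choiceType) (A M : set S) : finite_set M ->
  Ncount A M = Some #|` fset_set (A `&` M)|%fset.
Proof.
move=> fM; rewrite /Ncount; case: pselect => // H; exfalso; apply: H.
exact: finite_setIr.
Qed.

Section control.
Variables (R : realType) (d : measure_display) (S : measurableType d)
  (dO : measure_display) (Omega : measurableType dO) (P : probability Omega R).
Hypothesis Hdiag : measurable [set p : S * S | p.1 = p.2].
Variable pik : nat -> Omega -> set S.
Hypothesis Hpik : forall k, finite_cr_set (pik k).

Lemma set1_meas (x : S) : measurable [set x].
Proof.
have := measurable_xsection x Hdiag; congr measurable.
by apply/seteqP; split => y /=; rewrite /xsection /= inE /= => ->.
Qed.

Lemma pik_meas k w : measurable (pik k w).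
Proof.
apply: countable_measurable; first exact: set1_meas.
exact/finite_set_countable/((Hpik k).2 w).
Qed.

Definition wk k w : R :=
  (1 / (2 ^ (k + 1))%:R / (1 + (#|` fset_set (pik k w)|%fset)%:R))%R.

Lemma wk_ge0 k w : (0 <= wk k w)%R.
Proof. by rewrite /wk divr_ge0// ?divr_ge0// addr_ge0. Qed.

Definition hk k w : {measure set S -> \bar R} :=
  mscale (NngNum (wk_ge0 k w)) (mrestr counting (pik_meas k w)).

Definition hh w : {measure set S -> \bar R} := mseries (fun k => hk k w) 0.

Lemma hkE k w U : hk k w U =
  (wk k w)%:E * (#|` fset_set (U `&` pik k w)|%fset)%:R%:E.
Proof.
rewrite /hk /= /mscale /= /mrestr /counting asboolT//.
exact: finite_setIr ((Hpik k).2 w).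
Qed.

Lemma hh_meas U : measurable U -> measurable_fun setT (fun w => hh w U).
Proof.
move=> mU; rewrite /hh /= /mseries.
apply: (@ge0_emeasurable_sum _ _ _ _ _ xpredT) => [k w _ _|k _].
  exact: measure_ge0.
pose F := fun a b : nat => ((1 / (2 ^ (k + 1))%:R / (1 + b%:R))%:E * a%:R%:E : \bar R).
have -> : (fun w => hk k w U) = fun w =>
  F (#|` fset_set (U `&` pik k w)|%fset) (#|` fset_set (pik k w)|%fset).
  by apply/funext => w; rewrite hkE.
apply: (@measurable_nat2 _ _ _ _ _ F) => j.
  have -> : (fun w => #|` fset_set (U `&` pik k w)|%fset) @^-1` [set j] =
    pik k @^-1` [set M | Ncount U M = Some j].
    apply/seteqP; split => w /=; have fw := (Hpik k).2 w; rewrite NcountE//.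
    by move=> ->.
    by case.
  exact: Ncount_meas (Hpik k).1 mU.
have -> : (fun w => #|` fset_set (pik k w)|%fset) @^-1` [set j] =
  pik k @^-1` [set M | Ncount setT M = Some j].
  apply/seteqP; split => w /=; have fw := (Hpik k).2 w; rewrite NcountE// setTI.
  by move=> ->.
  by case.
exact: Ncount_meas (Hpik k).1 measurableT.
Qed.


Definition lam (U : set S) : \bar R := \int[P]_w hh w U.

Let lam0 : lam set0 = 0.
Proof.
by rewrite /lam (eq_integral (cst 0)) ?integral0// => y _; rewrite measure0.
Qed.

Let lam_ge0 U : 0 <= lam U. Proof. exact: integral_ge0. Qed.

Let lam_ssa : semi_sigma_additive lam.
Proof.
move=> U mU tU mUU; rewrite [X in _ --> X](_ : _ =
  \int[P]_w (\sum_(n <oo) hh w (U n))); last first.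
  apply: eq_integral => V _.
  by apply/esym/cvg_lim => //; exact/measure_semi_sigma_additive.
apply/cvg_closeP; split.
  by apply: is_cvg_nneseries => n _ _; exact: integral_ge0.
rewrite closeE// integral_nneseries// => n.
exact: hh_meas.
Qed.

HB.instance Definition _ := isMeasure.Build _ _ R lam lam0 lam_ge0 lam_ssa.

Lemma geo1 : \sum_(0 <= k <oo) (1 / (2 ^ (k + 1))%:R)%:E = (1 : \bar R).
Proof.
apply: cvg_lim => //.
have -> : (1 : \bar R) = ((1 : R) / 2 ^+ 0)%:E by rewrite expr0 divr1.
exact: (@cvg_geometric_eseries_half R 1 0).
Qed.

Lemma hh_le1 w : hh w setT <= 1.
Proof.
rewrite /hh /= /mseries -geo1; apply: lee_nneseries => [k _ _|k _].
  exact: measure_ge0.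
rewrite hkE setTI -EFinM lee_fin /wk.
set N := (#|` _ |%fset)%:R.
set a := (1 / (2 ^ (k + 1))%:R)%R.
have a0 : (0 <= a)%R by rewrite /a divr_ge0.
have N0 : (0 <= N)%R by rewrite /N.
rewrite mulrAC ler_pdivrMr ?ltr_wpDr//.
by rewrite ler_wpM2l// lerDr.
Qed.

Lemma lam_setT : lam setT <= 1.
Proof.
rewrite /lam (@le_trans _ _ (\int[P]_w cst 1 w))//.
  apply: ge0_le_integral => //.
  - exact: hh_meas.
  - by move=> w Hw; exact: hh_le1.
by rewrite integral_cst// mul1e; exact: probability_le1.
Qed.

Let lam_fin : fin_num_fun lam.
Proof.
move=> A mA; rewrite ge0_fin_numE ?measure_ge0//.
apply: (le_lt_trans (le_measure _ _ _ (subsetT A))); rewrite ?inE//.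
by rewrite (le_lt_trans lam_setT)// ltey.
Qed.

HB.instance Definition _ := Measure_isFinite.Build _ _ R lam lam_fin.

End control.

Section control2.
Variables (R : realType) (d : measure_display) (S : measurableType d)
  (dO : measure_display) (Omega : measurableType dO) (P : probability Omega R)
  (pi : Omega -> set S).
Hypothesis Hcr : cr_set pi.
Hypothesis Hdiag : measurable [set p : S * S | p.1 = p.2].
Variable pik : nat -> Omega -> set S.
Hypothesis Hpik : forall k, finite_cr_set (pik k).
Hypothesis Hpi : forall w, pi w = \bigcup_k pik k w.

Lemma card_ne0 (X : set S) x : finite_set X -> X x -> (#|` fset_set X|%fset != 0)%N.
Proof.
move=> fX Xx; apply/negP; rewrite cardfs_eq0 => /eqP/(fset_set_set0 fX) X0.
by rewrite X0 in Xx.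
Qed.

Lemma lam0_fm0 A : measurable A -> lam P Hdiag Hpik A = 0 -> fm P pi A = 0.
Proof.
move=> mA l0.
have := (ae_eq_integral_abs P measurableT (hh_meas Hdiag Hpik mA)).1.
case.
  rewrite -l0 /lam; apply: eq_integral => w _.
  by rewrite gee0_abs// measure_ge0.
move=> N [mN N0 sub].
have CN : ~` EE pi A `<=` N.
  move=> w /= nE; apply: sub => /=; apply/not_implyP; split => //.
  have [x [pix Ax]] : exists x, pi w x /\ A x.
    apply: contrapT => H; apply: nE; apply/seteqP; split => // y [piy Ay].
    by apply: H; exists y.
  move: pix; rewrite Hpi => -[k _ pikx].
  apply/eqP; rewrite gt_eqF//.
  apply: (@lt_le_trans _ _ (hk R Hdiag Hpik k w A)).
    rewrite hkE; apply: mule_gt0; rewrite lte_fin.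
      by rewrite /wk divr_gt0// ?divr_gt0// ?ltr0n ?expn_gt0// ltr_wpDr.
    rewrite ltr0n lt0n; apply: (@card_ne0 _ x) => //.
    exact: finite_setIr ((Hpik k).2 w).
  rewrite /hh /= /mseries.
  apply: (le_trans _ (@nneseries_lim_ge R (fun n => hk R Hdiag Hpik n w A) xpredT 0 k.+1 _)).
    rewrite big_mkcond big_nat_recr//=; apply: leeDr; apply: sume_ge0 => n _; exact: measure_ge0.
  by move=> n _ _; exact: measure_ge0.
have PC0 : P (~` EE pi A) = 0.
  apply/eqP; rewrite eq_le measure_ge0 andbT -N0; apply: le_measure => //;
    rewrite inE//; exact/measurableC/EE_meas.
rewrite fmE// -gl1; congr gl.
rewrite probability_setC in PC0; last exact: EE_meas.
rewrite (ppE _ Hcr mA) -EFinB in PC0; case: PC0 => /eqP.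
by rewrite subr_eq0 => /eqP <-.
Qed.

End control2.


Section fin_add.
Context d (T : measurableType d) (R : realType).
Variables (m1 m2 : {finite_measure set T -> \bar R}).
Definition madd (A : set T) := m1 A + m2 A.
Let madd0 : madd set0 = 0. Proof. by rewrite /madd !measure0 adde0. Qed.
Let madd_ge0 A : 0 <= madd A. Proof. by rewrite /madd adde_ge0. Qed.
Let madd_ssa : semi_sigma_additive madd.
Proof.
move=> F mF tF mU; rewrite /madd.
under eq_fun do rewrite big_split /=.
apply: cvgeD.
- by rewrite fin_num_adde_defl// fin_num_measure.
- exact: measure_semi_sigma_additive.
- exact: measure_semi_sigma_additive.
Qed.
HB.instance Definition _ := isMeasure.Build _ _ _ madd madd0 madd_ge0 madd_ssa.
Let fin : fin_num_fun madd.
Proof. by move=> A mA; rewrite /madd fin_numD !fin_num_measure. Qed.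
HB.instance Definition _ := Measure_isFinite.Build _ _ _ madd fin.
End fin_add.

Lemma series_cst_pos (R : realType) (x : R) : (0 < x)%R ->
  \sum_(0 <= n <oo) x%:E = +oo.
Proof.
move=> x0.
have s0 : 0 <= \sum_(0 <= n <oo) x%:E.
  by apply: nneseries_ge0 => n _; rewrite lee_fin ltW.
apply/eqP; rewrite eq_le leey /=; apply/negP => /negP; rewrite -ltNge => slt.
have : \sum_(0 <= n <oo) x%:E \is a fin_num by rewrite ge0_fin_numE.
move: slt s0; set s := \sum_(0 <= n <oo) x%:E => slt s0 sfin.
have sE : s = (fine s)%:E by rewrite fineK.
pose k := (Num.truncn (fine s / x)).+1.
have := @nneseries_lim_ge R (fun=> x%:E) xpredT 0 k (fun n _ _ => ltW x0).
rewrite -/s sE sumEFin lee_fin sumr_const_nat subn0 => H.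
have := truncnS_gt (fine s / x); rewrite -/k ltr_pdivrMr// => H2.
have := le_lt_trans H H2.
by rewrite mulr_natl ltxx.
Qed.


Unset Implicit Arguments.
Theorem proposition6p9 (R : realType) (d : measure_display) (S : measurableType d)
  (dO : measure_display) (Omega : measurableType dO) (P : probability Omega R)
  (pi : Omega -> set S) :
  measurable [set p : S * S | p.1 = p.2] ->
  cr_set pi -> constructive pi -> independent_increments P pi ->
  exists mu : nat -> {finite_measure set S -> \bar R},
    forall A : set S, measurable A ->
      neglog1m (hitting P pi A) = \sum_(0 <= n <oo) mu n A.
Proof.
move=> Hdiag Hcr [pik [Hpik Hpi]] Hind.
pose f : {measure set S -> \bar R} := fmm Hcr Hind.
have fE A : f A = neglog1m (hitting P pi A) by [].
pose lm : {finite_measure set S -> \bar R} := lam P Hdiag Hpik.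
have lmf0 A : measurable A -> lm A = 0 -> f A = 0.
  by move=> mA h; exact: (lam0_fm0 Hcr Hpi mA h).
have lmfin A : measurable A -> lm A \is a fin_num.
  by move=> mA; exact: fin_num_measure.
pose K := [set x : R | exists C, [/\ measurable C, f C < +oo & x = fine (lm C)]].
have Kub : has_ubound K.
  exists (fine (lm setT)) => x [C [mC _ ->]].
  apply: fine_le; rewrite ?inE; try exact: lmfin.
  by apply: le_measure; rewrite ?inE.
have Ksup : has_sup K.
  split => //; exists 0%R; exists set0; split => //; first by rewrite measure0.
  by rewrite measure0.
pose s := sup K.
have ubK C : measurable C -> f C < +oo -> (fine (lm C) <= s)%R.
  by move=> mC fC; apply: ub_le_sup => //; exists C.
have adh n : exists C, [/\ measurable C, f C < +oo &
    (s - n.+1%:R^-1 < fine (lm C))%R].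
  have [x [C [mC fC ->]] H] := @sup_adherent R K (n.+1%:R^-1) (ltac:(by [])) Ksup.
  by exists C.
have [C HC] := choice adh.
have mC n : measurable (C n) by have [] := HC n.
have fC n : f (C n) < +oo by have [] := HC n.
have sC n : (s - n.+1%:R^-1 < fine (lm (C n)))%R by have [] := HC n.
pose Cs := \bigcup_n C n.
have mCs : measurable Cs by exact: bigcupT_measurable.
pose Tl := ~` Cs.
have mTl : measurable Tl by exact: measurableC.
have mD n : measurable (seqDU C n).
  by apply: measurableD => //; exact: bigsetU_measurable.
have fD n : f (seqDU C n) < +oo.
  apply: le_lt_trans (fC n); apply: le_measure; rewrite ?inE//.
  by move=> x [].
pose mu n : {finite_measure set S -> \bar R} :=
  madd (mfrestr (mD n) (fD n)) (mrestr lm mTl).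
exists mu => A mA.
rewrite -fE.
have -> : \sum_(0 <= n <oo) mu n A =
    \sum_(0 <= n <oo) (f (A `&` seqDU C n) + lm (A `&` Tl)) by [].
rewrite nneseriesD; last 2 first.
- by move=> i _ _; exact: measure_ge0.
- by move=> i _ _; exact: measure_ge0.
have mB : measurable (A `&` Tl) by exact: measurableI.
have -> : \sum_(0 <= n <oo) f (A `&` seqDU C n) = f (A `&` Cs).
  have -> : A `&` Cs = \bigcup_n (A `&` seqDU C n).
    by rewrite /Cs seqDU_bigcup_eq setI_bigcupr.
  apply: cvg_lim => //; apply: measure_sigma_additive.
    by move=> n; exact: measurableI.
  move=> i j _ _ [x [[_ Hi] [_ Hj]]]; apply: (trivIset_seqDU C) => //.
  by exists x.
have -> : \sum_(0 <= n <oo) lm (A `&` Tl) = f (A `&` Tl).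
  case: (eqVneq (lm (A `&` Tl)) 0) => [l0|ln0].
    by rewrite l0 eseries0// lmf0.
  have lpos : 0 < lm (A `&` Tl) by rewrite lt_def ln0 measure_ge0.
  have fl := lmfin _ mB.
  have lposR : (0 < fine (lm (A `&` Tl)))%R by rewrite fine_gt0// lpos -ge0_fin_numE ?measure_ge0.
  rewrite -(fineK fl) series_cst_pos//.
  apply/esym/eqP; rewrite eq_le leey /=; apply/negP => /negP; rewrite -ltNge => fBlt.
  have small n : (fine (lm (A `&` Tl)) < n.+1%:R^-1)%R.
    have mU := measurableU _ _ mB (mC n).
    have fU : f ((A `&` Tl) `|` C n) < +oo.
      exact: le_lt_trans (measureU2 f mB (mC n)) (lte_add_pinfty fBlt (fC n)).
    have := ubK _ mU fU.
    rewrite measureU//; last first.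
      apply/seteqP; split => x // [[_ Tx] Cx]; apply: Tx; exists n => //.
    rewrite fineD ?lmfin// => H.
    have H3 : (s < n.+1%:R^-1 + fine (lm (C n)))%R by rewrite -ltrBlDl; exact: sC.
    by rewrite -(ltrD2r (fine (lm (C n)))); exact: le_lt_trans H H3.
  have [k Hk] := ltr_add_invr lposR.
  have := small k; rewrite add0r in Hk.
  by rewrite ltNge (ltW Hk).
rewrite (measureDI f mA mCs) addeC setDE.
by [].
Qed.
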